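(* Let $\mathcal{A}$ be a unital $\mathbb{F}$-algebra with $\dim\mathcal{A}=n>4$, let $S$ be a generating set of $\mathcal{A}$, and let $(m_0,m_1,\ldots,m_{n-1})$ be the characteristic sequence of $S$. If $h\in\{4,\ldots,n-1\}$ and $m_h>2^{h-2}$, then $m_h=2^{h-2}+2^{q}$ for some $q\in\{0,\ldots,h-2\}$.
   Context: All algebras are finite-dimensional, unital, not necessarily associative algebras over a field $\mathbb{F}$. For a finite generating set $S$ of $\mathcal{A}$, a word in $S$ is any product (with any bracketing) of finitely many elements of $S$; its length is the number of factors, and $1$ is a word of length $0$. $L_i(S)$ is the linear span of all words in $S$ of length at most $i$ (so $L_0(S)=\mathbb{F}$). The characteristic sequence of $S$ is the non-decreasing sequence of non-negative integers $(m_0,\ldots,m_{n-1})$ constructed as follows: $m_0=0$; with $s_1=\dim L_1(S)-1$, set $m_1=\cdots=m_{s_1}=1$; inductively, if $m_1,\ldots,m_r$ are defined using $L_1(S),\ldots,L_{k-1}(S)$, put $s_k=\dim L_k(S)-\dim L_{k-1}(S)$ and set $m_{r+1}=\cdots=m_{r+s_k}=k$. (Thus each $k\ge1$ occurs exactly $\dim L_k(S)-\dim L_{k-1}(S)$ times, and the sequence has $n=\dim\mathcal{A}$ terms.) *)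

(* Defs.v *)
From HB Require Import structures.
From mathcomp Require Import all_boot all_order all_algebra.
Set Implicit Arguments. Unset Strict Implicit. Unset Printing Implicit Defensive.
Import GRing.Theory.
Local Open Scope ring_scope.

(* A finite-dimensional, unital, not necessarily associative algebra over a
   field F is modelled as a finite-dimensional F-vector space V (vectType)
   together with a bilinear multiplication [mul] and a two-sided unit [one]. *)
Definition is_unital_algebra (F : fieldType) (V : vectType F)
    (mul : V -> V -> V) (one : V) : Prop :=
  [/\ (forall (a : F) (x y z : V), mul (a *: x + y) z = a *: mul x z + mul y z),
      (forall (a : F) (x y z : V), mul x (a *: y + z) = a *: mul x y + mul x z),
      (forall x : V, mul one x = x) &
      (forall x : V, mul x one = x)].

Fixpoint words_aux (F : fieldType) (V : vectType F) (mul : V -> V -> V)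
    (one : V) (S : seq V) (fuel k : nat) {struct fuel} : seq V :=
  match fuel with
  | 0%N => [::]
  | fuel'.+1 =>
    match k with
    | 0%N => [:: one]
    | 1%N => S
    | _ => flatten [seq [seq mul u v | u <- words_aux mul one S fuel' i,
                                        v <- words_aux mul one S fuel' (k - i)]
                   | i <- iota 1 k.-1]
    end
  end.

Definition words (F : fieldType) (V : vectType F) (mul : V -> V -> V)
    (one : V) (S : seq V) (k : nat) : seq V := words_aux mul one S k.+1 k.

Definition Lspace (F : fieldType) (V : vectType F) (mul : V -> V -> V)
    (one : V) (S : seq V) (i : nat) : {vspace V} :=
  <<flatten [seq words mul one S k | k <- iota 0 i.+1]>>%VS.

Definition generates (F : fieldType) (V : vectType F) (mul : V -> V -> V)
    (one : V) (S : seq V) : Prop :=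
  exists i, Lspace mul one S i = fullv.

(* [charseq_at mul one S h k] : the h-th term m_h of the characteristic
   sequence of S equals k.  Each k >= 1 occupies the indices
   dim L_{k-1} .. dim L_k - 1, and m_0 = 0 (dim L_0 = 1); hence m_h is the
   least k with h < dim L_k(S). *)
Definition charseq_at (F : fieldType) (V : vectType F) (mul : V -> V -> V)
    (one : V) (S : seq V) (h k : nat) : Prop :=
  (h < \dim (Lspace mul one S k))%N /\
  (forall j, (j < k)%N -> (\dim (Lspace mul one S j) <= h)%N).

(* Main.v *)
Require Import Defs.
From mathcomp Require Import all_boot all_order all_algebra.
From mathcomp Require Import zify.
Set Implicit Arguments. Unset Strict Implicit.
Import GRing.Theory.
Section Comb.
Variable K : nat -> bool.
Hypothesis Kdec : forall k, K k -> 2 <= k ->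
  exists x y, [/\ 1 <= x, 1 <= y, x + y = k, K x & K y].

Fixpoint cnt k := match k with 0 => 0 | k'.+1 => cnt k' + K k'.+1 end.

Lemma cnt_mono x k : x <= k -> cnt x <= cnt k.
Proof.
elim: k => [|k IH]; first by rewrite leqn0 => /eqP->.
rewrite leq_eqVlt => /orP[/eqP->//|]; rewrite ltnS => /IH /= h; lia.
Qed.

Lemma cnt_lt x k : x < k -> K k -> cnt x < cnt k.
Proof.
case: k => // k; rewrite ltnS => /cnt_mono h /= ->; lia.
Qed.

Lemma cnt_pos k : K k -> 1 <= k -> 1 <= cnt k.
Proof. case: k => // k /= ->; lia. Qed.

Lemma cnt_inj x y : K x -> K y -> cnt x = cnt y -> x = y.
Proof.
move=> Kx Ky e; case: (ltngtP x y) => // h.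
  by have := cnt_lt h Ky; lia.
by have := cnt_lt h Kx; lia.
Qed.

Definition p2 a := 2 ^ a.
Lemma p2le a b : a <= b -> p2 a <= p2 b.
Proof. exact: leq_pexp2l. Qed.
Lemma p2pos a : 0 < p2 a.
Proof. by rewrite /p2 expn_gt0. Qed.
Lemma p2S a : p2 a.+1 = 2 * p2 a.
Proof. by rewrite /p2 expnS. Qed.
Lemma p20 : p2 0 = 1. Proof. by []. Qed.

Lemma strong (P : nat -> Prop) : (forall k, (forall x, x < k -> P x) -> P k) -> forall k, P k.
Proof.
move=> H k; have: forall x, x <= k -> P x.
  elim: k => [|k IH] x hx; apply: H => y hy; first lia.
  apply: IH; lia.
by apply.
Qed.

Lemma boundA k : K k -> 1 <= k -> k <= p2 (cnt k).-1.
Proof.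
elim/strong: k => k IH Kk k1.
case: (leqP k 1) => hk.
  have := p2pos (cnt k).-1; lia.
have [x [y [x1 y1 e Kx Ky]]] := Kdec Kk hk.
have hx := IH x ltac:(lia) Kx x1; have hy := IH y ltac:(lia) Ky y1.
have cx := cnt_lt (_ : x < k) Kk; have cy := cnt_lt (_ : y < k) Kk.
have := cx ltac:(lia); have := cy ltac:(lia) => {cx cy} cy cx.
have px := cnt_pos Kx x1.
case E: (cnt k) cx cy => [|[|j]] cx cy; try lia.
have := @p2le (cnt x).-1 j ltac:(lia).
have := @p2le (cnt y).-1 j ltac:(lia).
rewrite /= p2S; lia.
Qed.

Lemma boundC k : K k -> 1 <= k -> k = p2 (cnt k).-1 ->
  forall z, K z -> 1 <= z -> z <= k -> z = p2 (cnt z).-1.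
Proof.
elim/strong: k => k IH Kk k1 ek z Kz z1 zk.
case: (leqP k 1) => hk.
  have zz : z = 1 by lia.
  subst z.
  by rewrite /= Kz.
have [x [y [x1 y1 e Kx Ky]]] := Kdec Kk hk.
have hx := boundA Kx x1; have hy := boundA Ky y1.
have cx := @cnt_lt x k ltac:(lia) Kk.
have cy := @cnt_lt y k ltac:(lia) Kk.
have px := cnt_pos Kx x1; have py := cnt_pos Ky y1.
case E: (cnt k) ek cx cy => [|[|j]] ek cx cy; try lia.
have ex : cnt x = j.+1.
  case: (ltnP (cnt x) j.+1) => h; last lia.
  have := @p2le (cnt x).-1 j.-1 ltac:(lia).
  have := @p2le (cnt y).-1 j ltac:(lia).
  case: j E ek h cx cy => [|j] /=; rewrite ?p2S ?p20 => *; lia.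
have ey : cnt y = j.+1.
  case: (ltnP (cnt y) j.+1) => h; last lia.
  have := @p2le (cnt y).-1 j.-1 ltac:(lia).
  have := @p2le (cnt x).-1 j ltac:(lia).
  case: j E ek h cx cy ex => [|j] /=; rewrite ?p2S ?p20 => *; lia.
move: hx hy; rewrite ex ey /= => hx hy.
have xe : x = p2 j by move: ek; rewrite /= p2S; lia.
case: (leqP z x) => zx.
  by apply: (IH x) => //; try lia; rewrite ex.
case: (ltnP z k) => zk'.
  have := cnt_lt zx Kz; have := cnt_lt zk' Kk; lia.
have -> : z = k by lia.
by rewrite E.
Qed.

Lemma boundB k : K k -> 1 <= k -> p2 (cnt k).-2 < k ->
  exists q, q <= (cnt k).-2 /\ k = p2 (cnt k).-2 + p2 q.
Proof.
elim/strong: k => k IH Kk k1 hk.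
have pk := p2pos (cnt k).-2.
have [x0 [y0 [x01 y01 e0 Kx0 Ky0]]] := Kdec Kk ltac:(lia).
have [x [y [[x1 y1 e Kx Ky] yx]]] : exists x y, [/\ 1 <= x, 1 <= y, x + y = k, K x & K y] /\ y <= x.
  case: (leqP y0 x0) => h; first by exists x0, y0.
  exists y0, x0; split; [split => //; lia | lia].
have hx := boundA Kx x1; have hy := boundA Ky y1.
have cx := @cnt_lt x k ltac:(lia) Kk.
have cy := @cnt_lt y k ltac:(lia) Kk.
have px := cnt_pos Kx x1; have py := cnt_pos Ky y1.
have cyx := cnt_mono yx.
case E: (cnt k) hk cx cy => [|[|t]] /= hk cx cy; try lia.
case: t E hk cx cy => [|s] E hk cx cy.
  have h0 : (cnt x).-1 = 0 by lia.
  have h1 : (cnt y).-1 = 0 by lia.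
  rewrite h0 h1 p20 in hx hy.
  exists 0; rewrite p20; split => //; lia.
have ps := p2pos s.
rewrite p2S in hk.
have ex : cnt x = s.+2.
  case: (ltnP (cnt x) s.+2) => h; last lia.
  have := @p2le (cnt x).-1 s ltac:(lia); lia.
have [q' [hq' xe]] : exists q', q' <= s /\ x = p2 s + p2 q'.
  have := IH x ltac:(lia) Kx x1; rewrite ex /=.
  move=> H; apply: H; lia.
case: (ltnP q' s) => hq.
  case: s E hk cx cy ex hq' xe hq ps => [//|r] E hk cx cy ex hq' xe hq ps.
  have := @p2le q' r ltac:(lia); rewrite p2S in hk xe ps * => hqr.
  have pr := p2pos r.
  have hcy : r.+2 <= cnt y.
    case: (ltnP (cnt y) r.+2) => h; last lia.
    have := @p2le (cnt y).-1 r ltac:(lia); lia.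
  case: (ltnP (cnt y) r.+3) => hcy2; last first.
    have yx' : y = x by apply: cnt_inj => //; lia.
    exists q'.+1; rewrite !p2S; split; lia.
  have [r' [hr' ye]] : exists r', r' <= r /\ y = p2 r + p2 r'.
    have := IH y ltac:(lia) Ky y1.
    have -> : (cnt y).-2 = r by lia.
    move=> H; apply: H; lia.
  have := @p2le r' r ltac:(lia) => hr'r.
  case: (ltnP q' r) => hq2; last first.
    have qe : q' = r by lia.
    subst q'; exists r'; rewrite !p2S; split; lia.
  case: (ltnP r' r) => hr2; last first.
    have re : r' = r by lia.
    subst r'; exists q'; rewrite !p2S; split; lia.
  case: r hq2 hr2 {E hk cx cy ex hq' xe hq ps hqr pr hcy hcy2 ye hr' hr'r} (hk) (xe) (ye) => [//|p] hq2 hr2 hk' xe' ye'.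
  have := @p2le q' p ltac:(lia); have := @p2le r' p ltac:(lia).
  rewrite !p2S in hk' xe' ye'; lia.
have qe : q' = s by lia.
subst q'.
have xe' : x = p2 (cnt x).-1 by rewrite ex /= p2S; lia.
have ye := boundC Kx x1 xe' Ky y1 yx.
exists (cnt y).-1; split; first lia.
rewrite p2S; lia.
Qed.

End Comb.

Section Alg.
Variables (F : fieldType) (V : vectType F) (mul : V -> V -> V) (one : V) (S : seq V).
Hypothesis Halg : is_unital_algebra mul one.

Local Notation w := (words mul one S).
Local Notation L := (Lspace mul one S).

Lemma words_aux_fuel f g i : (i < f)%N -> (i < g)%N ->
  words_aux mul one S f i = words_aux mul one S g i.
Proof.
elim: f g i => [|f IH] [|g] i //= hf hg.
case: i hf hg => [|[|i]] hf hg //.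
congr flatten; apply/eq_in_map => a; rewrite mem_iota => /andP[a1 a2].
by rewrite (IH g a) ?(IH g (i.+2 - a)) //; lia.
Qed.

Lemma words_aux_S f k : words_aux mul one S f.+1 k.+2 =
  flatten [seq [seq mul u v | u <- words_aux mul one S f i,
                v <- words_aux mul one S f (k.+2 - i)] | i <- iota 1 k.+1].
Proof. by []. Qed.

Lemma words_succ k : (2 <= k)%N ->
  w k = flatten [seq [seq mul u v | u <- w i, v <- w (k - i)] | i <- iota 1 k.-1].
Proof.
case: k => [|[|k]] // _; rewrite {1}/words words_aux_S.
congr flatten; apply/eq_in_map => a; rewrite mem_iota => /andP[a1 a2].
by rewrite /words (@words_aux_fuel k.+2 a.+1 a) ?(@words_aux_fuel k.+2 (k.+2 - a).+1) //; lia.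
Qed.

Lemma words_mul a b u v : (1 <= a)%N -> (1 <= b)%N -> u \in w a -> v \in w b ->
  mul u v \in w (a + b).
Proof.
move=> a1 b1 ua vb; rewrite words_succ; last lia.
apply/flattenP; exists [seq mul u v | u <- w a, v <- w (a + b - a)].
  apply/mapP; exists a => //; rewrite mem_iota; lia.
by rewrite addKn; apply: allpairs_f.
Qed.

Lemma words_dec k x : (2 <= k)%N -> x \in w k ->
  exists i u v, [/\ (1 <= i < k)%N, u \in w i, v \in w (k - i) & x = mul u v].
Proof.
move=> k2; rewrite words_succ // => /flattenP[s /mapP[i]].
rewrite mem_iota => hi -> /allpairsP[[u v] /= [hu hv ->]].
exists i, u, v; split => //; lia.
Qed.


Local Open Scope ring_scope.

Lemma mul0l z : mul 0 z = 0.
Proof.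
case: Halg => h1 _ _ _.
have := h1 1 0 0 z; rewrite scaler0 addr0 scale1r => e.
have := congr1 (fun t => t - mul 0 z) e; rewrite addrK subrr => e2; exact: esym e2.
Qed.

Lemma mul0r z : mul z 0 = 0.
Proof.
case: Halg => _ h1 _ _.
have := h1 1 z 0 0; rewrite scaler0 addr0 scale1r => e.
have := congr1 (fun t => t - mul z 0) e; rewrite addrK subrr => e2; exact: esym e2.
Qed.

Lemma mul_spanl (X : seq V) (U : {vspace V}) u v : u \in <<X>>%VS ->
  (forall a, a \in X -> mul a v \in U) -> mul u v \in U.
Proof.
case: Halg => h1 _ _ _.
move=> /(@coord_span _ _ _ (in_tuple X)) -> H.
apply: (big_ind (fun t => mul t v \in U)).
- by rewrite mul0l mem0v.
- move=> x y hx hy; have -> : x + y = 1 *: x + y by rewrite scale1r.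
  by rewrite h1 scale1r memvD.
- move=> i _; rewrite -[_ *: _]addr0 h1 mul0l addr0 memvZ //.
  by apply: H; apply: mem_nth.
Qed.

Lemma mul_spanr (X : seq V) (U : {vspace V}) u v : v \in <<X>>%VS ->
  (forall a, a \in X -> mul u a \in U) -> mul u v \in U.
Proof.
case: Halg => _ h1 _ _.
move=> /(@coord_span _ _ _ (in_tuple X)) -> H.
apply: (big_ind (fun t => mul u t \in U)).
- by rewrite mul0r mem0v.
- move=> x y hx hy; have -> : x + y = 1 *: x + y by rewrite scale1r.
  by rewrite h1 scale1r memvD.
- move=> i _; rewrite -[_ *: _]addr0 h1 mul0r addr0 memvZ //.
  by apply: H; apply: mem_nth.
Qed.

Lemma mem_L i k x : (i <= k)%N -> x \in w i -> x \in L k.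
Proof.
move=> ik xw; apply: memv_span; apply/flattenP; exists (w i) => //.
apply/mapP; exists i => //; rewrite mem_iota; lia.
Qed.

Lemma L_elim k x : x \in flatten [seq w i | i <- iota 0 k.+1] ->
  exists2 i, (i <= k)%N & x \in w i.
Proof.
move=> /flattenP[s /mapP[i]]; rewrite mem_iota => hi -> xs.
exists i => //; lia.
Qed.

Lemma L_sub i k : (i <= k)%N -> (L i <= L k)%VS.
Proof.
move=> ik; apply/span_subvP => x /L_elim[j hj xj].
apply: (mem_L (i := j)) => //; lia.
Qed.

Lemma L_succ k : (L k.+1 <= L k + <<w k.+1>>)%VS.
Proof.
apply/span_subvP => x /L_elim[j hj xj].
case: (ltnP j k.+1) => h.
  by apply: (subvP (addvSl _ _)); apply: (mem_L (i := j)) => //; lia.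
have ej : j = k.+1 by lia.
by subst j; apply: (subvP (addvSr _ _)); apply: memv_span.
Qed.

Definition Kp i := (0 < i)%N && (\dim (L i.-1) < \dim (L i))%N.

Lemma L_eq i : (1 <= i)%N -> ~~ Kp i -> L i = L i.-1.
Proof.
move=> i1; rewrite /Kp i1 /= -leqNgt => h.
apply/eqP; rewrite eq_sym eqEdim h andbT; apply: L_sub; lia.
Qed.

Lemma Kdec k : Kp k -> (2 <= k)%N ->
  exists x y, [/\ (1 <= x)%N, (1 <= y)%N, (x + y = k)%N, Kp x & Kp y].
Proof.
move=> Kk k2.
case: (boolP [exists i : 'I_k, (1 <= i)%N && Kp i && Kp (k - i)]).
  move=> /existsP[i /andP[/andP[i1 Ki] Kki]].
  have io := ltn_ord i.
  exists i, (k - i)%N; split => //; lia.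
move=> /existsPn H; exfalso.
case: k Kk k2 H => [//|k] Kk k2 H.
have : (L k.+1 <= L k)%VS.
  apply: (subv_trans (L_succ k)); rewrite subv_add subvv /=.
  apply/span_subvP => x /(words_dec k2)[i [u [v [hi hu hv ->]]]].
  have := H (Ordinal (_ : i < k.+1)%N) => /(_ ltac:(lia)) /=.
  have -> : (1 <= i)%N by lia.
  rewrite /= negb_and => /orP[] nK.
  - have : u \in L i.-1 by rewrite -L_eq //; [apply: (mem_L (leqnn i) hu) | lia].
    move=> hu'; apply: (mul_spanl hu') => a /L_elim[j hj aj].
    case: j hj aj => [|j] hj aj.
      move: aj; rewrite /words /= inE => /eqP ->.
      case: Halg => _ _ -> _; apply: (mem_L _ hv); lia.
    have hw := @words_mul j.+1 (k.+1 - i) a v ltac:(lia) ltac:(lia) aj hv.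
    apply: (mem_L _ hw); lia.
  - have Hki : (1 <= k.+1 - i)%N by lia.
    have : v \in L (k.+1 - i).-1 by rewrite -L_eq //; apply: (mem_L (leqnn _) hv).
    move=> hv'; apply: (mul_spanr hv') => a /L_elim[j hj aj].
    case: j hj aj => [|j] hj aj.
      move: aj; rewrite /words /= inE => /eqP ->.
      case: Halg => _ _ _ ->; apply: (mem_L _ hu); lia.
    have hw := @words_mul i j.+1 u a ltac:(lia) ltac:(lia) hu aj.
    apply: (mem_L _ hw); lia.
move=> /dimvS; move: Kk; rewrite /Kp /=; lia.
Qed.

End Alg.

Unset Implicit Arguments.
Theorem theorem4p2 (F : fieldType) (V : vectType F) (mul : V -> V -> V)
    (one : V) (S : seq V) (n h mh : nat) :
  is_unital_algebra mul one ->
  \dim (fullv : {vspace V}) = n ->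
  (4 < n)%N ->
  generates mul one S ->
  (4 <= h)%N -> (h <= n - 1)%N ->
  charseq_at mul one S h mh ->
  (2 ^ (h - 2) < mh)%N ->
  exists q : nat, (q <= h - 2)%N /\ mh = (2 ^ (h - 2) + 2 ^ q)%N.
Proof.
move=> Halg hn n4 _ h4 hh [hmh hlt] hpow.
have {}hpow : (p2 (h - 2) < mh)%N := hpow.
have Kd := @Kdec _ _ mul one S Halg.
have one0 : one != 0%R.
  apply/eqP => e; have : (fullv <= (0%VS : {vspace V}))%VS.
    apply/subvP => x _; rewrite memv0; case: (Halg) => h1 _ h3 _.
    by rewrite -(h3 x) e (mul0l Halg).
  move/dimvS; rewrite dimv0 hn; lia.
have L0 : (1 <= \dim (Lspace mul one S 0))%N.
  have : one \in Lspace mul one S 0 by apply: (mem_L (leqnn 0)); rewrite /words /= inE.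
  by rewrite memvE => /dimvS; rewrite dim_vline one0.
have cntd : forall k, (cnt (Kp mul one S) k + \dim (Lspace mul one S 0) <= \dim (Lspace mul one S k))%N.
  elim => [|k IH] /=; first lia.
  have := dimvS (L_sub mul one S (leqnSn k)).
  have -> : Kp mul one S k.+1 = (\dim (Lspace mul one S k) < \dim (Lspace mul one S k.+1))%N by [].
  case: ltnP => /=; lia.
have p2h := p2pos (h - 2).
case: mh hmh hlt hpow => [|m] hmh hlt hpow; first lia.
have Km : Kp mul one S m.+1.
  by rewrite /Kp /=; have := hlt m (ltnSn m); lia.
have hc : (cnt (Kp mul one S) m.+1 <= h)%N.
  have := cntd m; have := hlt m (ltnSn m); rewrite /= Km; lia.
have hA := boundA Kd Km (ltn0Sn m).
have ec : cnt (Kp mul one S) m.+1 = h.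
  case: (ltnP (cnt (Kp mul one S) m.+1) h) => c; last lia.
  have := @p2le (cnt (Kp mul one S) m.+1).-1 (h - 2) ltac:(lia); lia.
have hB := boundB Kd Km (ltn0Sn m).
rewrite ec in hB.
have e2 : h.-2 = (h - 2)%N by lia.
rewrite e2 in hB; case: (hB hpow) => q [hq ->]; exists q; split => //.
Qed.
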